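(* Let $U\subset\mathbb R^m$ be compact, let $f:U\to\mathbb R$, and define $f^*(t)=\max_{u\in U}\{\langle u,t\rangle-f(u)\}$. Let $\mathcal X=\mathcal X_1\times\cdots\times\mathcal X_n$ be a block-structured parameter set and let $E(\bm\theta)=(E_1(\bm\theta),\dots,E_m(\bm\theta))$ with $E_j:\mathcal X\to\mathbb R$. Suppose that for each $j\in\{1,\dots,m\}$ and each block $i\in\{1,\dots,n\}$ there are functions $a_{ij},b_{ij}$ with $E_j(\bm\theta)=a_{ij}(\theta_i;\bar{\bm\theta}_i)-b_{ij}(\theta_i;\bar{\bm\theta}_i)$ for all $\bm\theta$, where $a_{ij}(\cdot;\bar{\bm\theta}_i)$ and $b_{ij}(\cdot;\bar{\bm\theta}_i)$ are convex in $\theta_i$ for each fixed $\bar{\bm\theta}_i$. For $j=1,\dots,m$ let $\underline u_j=\min_{u\in U}u_j$, $\bar u_j=\max_{u\in U}u_j$, $c_j^+=\max\{-\underline u_j,0\}$, $d_j^+=\max\{\bar u_j,0\}$, and let $c^+,d^+\in\mathbb R^m$ be the vectors with these components. Write $a_i=(a_{i1},\dots,a_{im})$, $b_i=(b_{i1},\dots,b_{im})$, and define $h_i(\theta_i;\bar{\bm\theta}_i)=\langle c^+,a_i(\theta_i;\bar{\bm\theta}_i)\rangle+\langle d^+,b_i(\theta_i;\bar{\bm\theta}_i)\rangle$, $g_i(\theta_i;\bar{\bm\theta}_i)=f^*(E(\bm\theta))+h_i(\theta_i;\bar{\bm\theta}_i)$. Then for every $i$, $f^*(E(\bm\theta))=g_i(\theta_i;\bar{\bm\theta}_i)-h_i(\theta_i;\bar{\bm\theta}_i)$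 with $g_i(\cdot;\bar{\bm\theta}_i)$ and $h_i(\cdot;\bar{\bm\theta}_i)$ convex in $\theta_i$ for every fixed $\bar{\bm\theta}_i$; in particular $f^*\circ E$ is BDC.
   Context: Block notation: for $\bm\theta\in\mathcal X$, $\theta_i$ is its $i$th block and $\bar{\bm\theta}_i$ is the vector obtained from $\bm\theta$ by setting the $i$th block to zero. A function is BDC if for every block $i$ it can be written as $g_i(\theta_i;\bar{\bm\theta}_i)-h_i(\theta_i;\bar{\bm\theta}_i)$ with both functions convex in $\theta_i$ for each fixed $\bar{\bm\theta}_i$. *)

(* Defs.v *)
From HB Require Import structures.
From mathcomp Require Import all_boot all_order all_algebra.
From mathcomp Require Import all_classical all_reals all_analysis.
Set Implicit Arguments. Unset Strict Implicit. Unset Printing Implicit Defensive.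
Import Order.TTheory GRing.Theory Num.Theory.
Import numFieldNormedType.Exports.
Local Open Scope classical_set_scope.
Local Open Scope ring_scope.

Section Defs.
Variable R : realType.

Definition dotv (m : nat) (u t : 'rV[R]_m) : R := \sum_(j < m) u 0 j * t 0 j.

(* Convex conjugate f^*(t) = max_{u in U} (<u,t> - f u), written as a sup
   (equal to the max whenever the max is attained). *)
Definition conj_fun (m : nat) (U : set 'rV[R]_m) (f : 'rV[R]_m -> R)
  (t : 'rV[R]_m) : R := sup [set dotv u t - f u | u in U].

(* Parameters live in R^N, coordinates partitioned into n blocks by blk.
   x and y have the same \bar\theta_i iff they agree outside block i. *)
Definition same_off_block (N n : nat) (blk : 'I_N -> 'I_n) (i : 'I_n)
  (x y : 'rV[R]_N) : Prop := forall k, blk k != i -> x 0 k = y 0 k.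

Definition block_convex (N n : nat) (X : set 'rV[R]_N) (blk : 'I_N -> 'I_n)
  (i : 'I_n) (F : 'rV[R]_N -> R) : Prop :=
  forall x y (t : R), X x -> X y -> same_off_block blk i x y ->
    0 <= t -> t <= 1 -> X (t *: x + (1 - t) *: y) ->
    F (t *: x + (1 - t) *: y) <= t * F x + (1 - t) * F y.

Definition BDC (N n : nat) (X : set 'rV[R]_N) (blk : 'I_N -> 'I_n)
  (F : 'rV[R]_N -> R) : Prop :=
  forall i : 'I_n, exists g h : 'rV[R]_N -> R,
    (forall th, X th -> F th = g th - h th) /\
    block_convex X blk i g /\ block_convex X blk i h.

Definition ulow (m : nat) (U : set 'rV[R]_m) (j : 'I_m) : R :=
  inf [set u 0 j | u in U].
Definition uhigh (m : nat) (U : set 'rV[R]_m) (j : 'I_m) : R :=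
  sup [set u 0 j | u in U].
Definition cplus (m : nat) (U : set 'rV[R]_m) : 'rV[R]_m :=
  \row_j Num.max (- ulow U j) 0.
Definition dplus (m : nat) (U : set 'rV[R]_m) : 'rV[R]_m :=
  \row_j Num.max (uhigh U j) 0.

Definition Evec (m N : nat) (E : 'I_m -> 'rV[R]_N -> R) (th : 'rV[R]_N)
  : 'rV[R]_m := \row_j E j th.

Definition hfun (m N n : nat) (U : set 'rV[R]_m)
  (a b : 'I_n -> 'I_m -> 'rV[R]_N -> R) (i : 'I_n) (th : 'rV[R]_N) : R :=
  dotv (cplus U) (\row_j a i j th) + dotv (dplus U) (\row_j b i j th).

Definition gfun (m N n : nat) (U : set 'rV[R]_m) (f : 'rV[R]_m -> R)
  (E : 'I_m -> 'rV[R]_N -> R)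
  (a b : 'I_n -> 'I_m -> 'rV[R]_N -> R) (i : 'I_n) (th : 'rV[R]_N) : R :=
  conj_fun U f (Evec E th) + hfun U a b i th.

End Defs.

(* Main.v *)
Require Import Defs.
From HB Require Import structures.
From mathcomp Require Import all_boot all_order all_algebra.
From mathcomp Require Import all_classical all_reals all_analysis.
From mathcomp Require Import ring lra.
Import Order.TTheory GRing.Theory Num.Theory.
Import numFieldNormedType.Exports.
Local Open Scope classical_set_scope.
Local Open Scope ring_scope.

Section Helpers.
Variable R : realType.

Lemma coord_bounds (m : nat) (U : set 'rV[R]_m) (j : 'I_m) (u : 'rV[R]_m) :
  compact U -> U u -> ulow U j <= u 0 j /\ u 0 j <= uhigh U j.
Proof.
move=> cU Uu.
have cS : compact [set v 0 j | v in U].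
  apply: continuous_compact => //.
  apply: continuous_subspaceT; exact: coord_continuous.
have [M [_ MA]] := compact_bounded cS.
have hb : forall y, [set v 0 j | v in U] y -> -(M + 1) <= y <= M + 1.
  move=> y Sy; rewrite -ler_norml.
  by apply: (MA (M + 1)) => //; rewrite ltrDl.
have Su : [set v 0 j | v in U] (u 0 j) by exists u.
split.
- apply: ge_inf => //; exists (-(M + 1)) => y /hb /andP[]//.
- apply: sup_upper_bound => //; split; first by exists (u 0 j).
  by exists (M + 1) => y /hb /andP[].
Qed.

Lemma conj_attained (m : nat) (U : set 'rV[R]_m) f t u :
  U u -> (forall v, U v -> dotv v t - f v <= dotv u t - f u) ->
  conj_fun U f t = dotv u t - f u.
Proof.
move=> Uu hu; rewrite /conj_fun; apply/le_anti/andP; split.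
- by apply: ge_sup; [exists (dotv u t - f u), u | move=> _ [v Uv <-]; exact: hu].
- apply: sup_upper_bound; last by exists u.
  split; first by exists (dotv u t - f u), u.
  by exists (dotv u t - f u) => _ [v Uv <-]; exact: hu.
Qed.

Lemma block_convex_comb (m N n : nat) (X : set 'rV[R]_N) (blk : 'I_N -> 'I_n)
  (i : 'I_n) (A B : 'I_m -> 'rV[R]_N -> R) (p q : 'I_m -> R) :
  (forall j, 0 <= p j) -> (forall j, 0 <= q j) ->
  (forall j, block_convex X blk i (A j) /\ block_convex X blk i (B j)) ->
  block_convex X blk i (fun th => \sum_(j < m) (p j * A j th + q j * B j th)).
Proof.
move=> hp hq hc x y t Xx Xy sxy t0 t1 Xz.
apply: (@le_trans _ _ (\sum_(j < m) (p j * (t * A j x + (1 - t) * A j y)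
   + q j * (t * B j x + (1 - t) * B j y)))).
  apply: ler_sum => j _; have [ha hb] := hc j.
  apply: lerD; apply: ler_wpM2l => //.
  exact: ha. exact: hb.
rewrite !mulr_sumr -big_split /=; rewrite le_eqVlt; apply/orP; left; apply/eqP/eq_bigr => j _; ring.
Qed.

End Helpers.

Theorem proposition3p4 (R : realType) (m N n : nat)
  (U : set 'rV[R]_m) (f : 'rV[R]_m -> R)
  (X : set 'rV[R]_N) (blk : 'I_N -> 'I_n)
  (E : 'I_m -> 'rV[R]_N -> R) (a b : 'I_n -> 'I_m -> 'rV[R]_N -> R) :
  compact U -> U !=set0 ->
  (forall t : 'rV[R]_m, exists2 u, U u &
     forall v, U v -> dotv v t - f v <= dotv u t - f u) ->
  (forall i j th, X th -> E j th = a i j th - b i j th) ->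
  (forall i j, block_convex X blk i (a i j) /\ block_convex X blk i (b i j)) ->
  (forall i : 'I_n,
     (forall th, X th ->
        conj_fun U f (Evec E th) = gfun U f E a b i th - hfun U a b i th) /\
     block_convex X blk i (gfun U f E a b i) /\
     block_convex X blk i (hfun U a b i)) /\
  BDC X blk (fun th => conj_fun U f (Evec E th)).
Proof.
move=> cU U0 hmax hE hc.
have hdiff : forall i th, conj_fun U f (Evec E th) =
    gfun U f E a b i th - hfun U a b i th.
  by move=> i th; rewrite /gfun addrK.
have hcp : forall j, 0 <= cplus U 0 j by move=> j; rewrite /cplus mxE le_max lexx orbT.
have hdp : forall j, 0 <= dplus U 0 j by move=> j; rewrite /dplus mxE le_max lexx orbT.
have hH : forall i th, hfun U a b i th =
    \sum_(j < m) (cplus U 0 j * a i j th + dplus U 0 j * b i j th).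
  move=> i th; rewrite /hfun /dotv -big_split /=; apply: eq_bigr => j _.
  by rewrite !mxE.
have hconvH : forall i, block_convex X blk i (hfun U a b i).
  move=> i x y t Xx Xy sxy t0 t1 Xz; rewrite !hH.
  by apply: (@block_convex_comb R m N n X blk i (a i) (b i)
    (fun j => cplus U 0 j) (fun j => dplus U 0 j)).
have hconvG : forall i, block_convex X blk i (gfun U f E a b i).
  move=> i x y t Xx Xy sxy t0 t1 Xz.
  set z := t *: x + (1 - t) *: y.
  have [u Uu hu] := hmax (Evec E z).
  set phi := fun th => \sum_(j < m) ((u 0 j + cplus U 0 j) * a i j th
      + (dplus U 0 j - u 0 j) * b i j th).
  have hphi : forall th, X th ->
      phi th = dotv u (Evec E th) + hfun U a b i th.
    move=> th Xth; rewrite hH /phi /dotv -big_split /=; apply: eq_bigr => j _.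
    rewrite /Evec !mxE (hE i j th Xth); ring.
  have hcoef : forall j, 0 <= u 0 j + cplus U 0 j /\ 0 <= dplus U 0 j - u 0 j.
    move=> j; have [l h] := @coord_bounds R m U j u cU Uu; rewrite /cplus /dplus !mxE.
    have h1 : - ulow U j <= Num.max (- ulow U j) 0 by rewrite le_max lexx.
    have h2 : uhigh U j <= Num.max (uhigh U j) 0 by rewrite le_max lexx.
    split; lra.
  have gz : gfun U f E a b i z = phi z - f u.
    by rewrite /gfun (@conj_attained R m U f _ u Uu hu) (hphi z Xz); ring.
  have conj_ge : forall th, dotv u (Evec E th) - f u <= conj_fun U f (Evec E th).
    move=> th; have [u' Uu' hu'] := hmax (Evec E th).
    by rewrite (@conj_attained R m U f _ u' Uu' hu'); exact: hu'.
  have gx : phi x - f u <= gfun U f E a b i x.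
    by rewrite (hphi x Xx) /gfun; have := conj_ge x; lra.
  have gy : phi y - f u <= gfun U f E a b i y.
    by rewrite (hphi y Xy) /gfun; have := conj_ge y; lra.
  have pc : phi z <= t * phi x + (1 - t) * phi y.
    apply: (@block_convex_comb R m N n X blk i (a i) (b i)
      (fun j => u 0 j + cplus U 0 j) (fun j => dplus U 0 j - u 0 j)) => //.
    - by move=> j; have [] := hcoef j.
    - by move=> j; have [] := hcoef j.
  have tx : t * (phi x - f u) <= t * gfun U f E a b i x by exact: ler_wpM2l.
  have ty : (1 - t) * (phi y - f u) <= (1 - t) * gfun U f E a b i y.
    by apply: ler_wpM2l => //; lra.
  rewrite gz; lra.
split.
  move=> i; split; first by move=> th _; exact: hdiff.
  by split; [exact: hconvG | exact: hconvH].
move=> i; exists (gfun U f E a b i), (hfun U a b i); split.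
  by move=> th _; exact: hdiff.
by split; [exact: hconvG | exact: hconvH].
Qed.
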